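(* Let $k\ge 2$, $n\ge1$, and let $L_n$ and $\varphi:L_n\to E^{n-1}$ be as in the context. Then $\varphi$ is a bijection.
   Context: $E=\{0,\dots,k-1\}$. For $\mathbf a\in E^n$, $w(\mathbf a)=a_1+\dots+a_n$, and $\mathcal B_t=\{\mathbf a\in E^n: w(\mathbf a)=t\}$. Let $g=\lfloor n(k-1)/2\rfloor$ and $C_i=\{\mathbf a\in E^n: a_1=i\}$. Define $L_n=(\mathcal B_0\cup\dots\cup\mathcal B_g)\cap(C_0\cup C_{k-1})$ if $n(k-1)$ is odd, and $L_n=((\mathcal B_0\cup\dots\cup\mathcal B_{g-1})\cap(C_0\cup C_{k-1}))\cup(\mathcal B_g\cap C_0)$ if $n(k-1)$ is even. For $a\in E$ let $\overline a=k-1-a$. Define $\varphi(a_1,\dots,a_n)=(a_2,\dots,a_n)$ if $a_1=0$ and $\varphi(a_1,\dots,a_n)=(\overline{a}_2,\dots,\overline{a}_n)$ if $a_1=k-1$. *)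

(* Defs.v *)
From mathcomp Require Import all_boot.
Set Implicit Arguments. Unset Strict Implicit. Unset Printing Implicit Defensive.

(* E = {0,...,k-1} is 'I_k ; E^n is n.-tuple 'I_k ; the tuple (a_1,...,a_n)
   is stored in order, so a_1 is the head. *)

Definition wt (k n : nat) (a : n.-tuple 'I_k) : nat := \sum_(i <- a) (i : nat).

(* first coordinate a_1 (as a natural number; meaningful for n >= 1) *)
Definition first_entry (k n : nat) (a : n.-tuple 'I_k) : nat :=
  head 0 (map (@nat_of_ord k) a).

Definition gval (k n : nat) : nat := (n * (k - 1))./2.

Definition in_C0_Ck1 (k n : nat) (a : n.-tuple 'I_k) : bool :=
  (first_entry a == 0) || (first_entry a == k - 1).

Definition L (k n : nat) : {set n.-tuple 'I_k} :=
  if odd (n * (k - 1)) then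
    [set a | (wt a <= gval k n) && in_C0_Ck1 a]
  else
    [set a | ((wt a < gval k n) && in_C0_Ck1 a)
             || ((wt a == gval k n) && (first_entry a == 0))].

(* complement  abar = k-1-a  is rev_ord (value k - a.+1 = k-1-a) *)
(* phi (a_1,...,a_n) = (a_2,...,a_n) if a_1 = 0, else (abar_2,...,abar_n)
   (the latter case is used for a_1 = k-1; on L_n these are the only cases) *)
Definition phi (k n : nat) (a : n.-tuple 'I_k) : (n.-1).-tuple 'I_k :=
  if first_entry a == 0 then behead_tuple a
  else map_tuple (@rev_ord k) (behead_tuple a).

(* Main.v *)
Require Import Defs.
From mathcomp Require Import all_boot.
From mathcomp Require Import zify.

Set Implicit Arguments. Unset Strict Implicit. Unset Printing Implicit Defensive.

Lemma wt_cons k m (x : 'I_k) (c : m.-tuple 'I_k) : wt (cons_tuple x c) = x + wt c.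
Proof. by rewrite /wt big_cons. Qed.

Lemma wt_rev k' m (c : m.-tuple 'I_k'.+1) :
  wt (map_tuple (@rev_ord k'.+1) c) + wt c = m * k'.
Proof.
rewrite /wt /=; case: c => s /= /eqP <-.
elim: s => [|x s IH]; first by rewrite !big_nil.
rewrite /= !big_cons /=; have := ltn_ord x; lia.
Qed.

Lemma fe_cons k m (x : 'I_k) (c : m.-tuple 'I_k) : first_entry (cons_tuple x c) = x.
Proof. by []. Qed.

Section S.
Variables k' m : nat.
Hypothesis hk : 1 <= k'.
Definition Aof (c : m.-tuple 'I_k'.+1) : m.+1.-tuple 'I_k'.+1 := cons_tuple ord0 c.
Definition Bof (c : m.-tuple 'I_k'.+1) : m.+1.-tuple 'I_k'.+1 :=
  cons_tuple ord_max (map_tuple (@rev_ord k'.+1) c).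

Lemma phiA c : phi (Aof c) = c.
Proof. by rewrite /phi /Aof fe_cons eqxx; apply/val_inj. Qed.

Lemma phiB c : phi (Bof c) = c.
Proof.
rewrite /phi /Bof fe_cons /=; have -> : (k' == 0) = false by lia.
apply/val_inj => /=; rewrite -map_comp; under eq_map do rewrite /= rev_ordK.
by rewrite map_id.
Qed.

Lemma BnotA c : (Bof c \in L k'.+1 m.+1) = ~~ (Aof c \in L k'.+1 m.+1).
Proof.
have hw := wt_rev c.
have hN := odd_double_half (m.+1 * k').
rewrite -muln2 in hN.
have e1 : (k' == 0) = false by lia.
rewrite /L /gval subn1 /=.
case: (odd (m.+1 * k')) hN => /= hN;
rewrite !inE /in_C0_Ck1 /Aof /Bof !fe_cons !wt_cons /= e1 ?orbF ?andbT ?andbF ?orbF;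
move: hw hN; set w := wt c; set w' := wt _; move=> hw hN; apply/idP/idP; lia.
Qed.

Lemma Ldecomp a : a \in L k'.+1 m.+1 -> a = Aof (phi a) \/ a = Bof (phi a).
Proof.
case: a => [[|x s] hs] //.
have hs' : size s == m by [].
have -> : Tuple hs = cons_tuple x (Tuple hs') by apply/val_inj.
have hx : first_entry (cons_tuple x (Tuple hs')) = x by [].
move=> hL.
have : (x == 0 :> nat) || (x == k' :> nat).
  move: hL; rewrite /L /=.
  by case: ifP => _; rewrite inE /in_C0_Ck1 hx subn1;
    [case/andP => _ -> | case/orP => /andP [_ ->] //; rewrite orbT].
case/orP => /eqP hx0.
- left; have -> : x = ord0 by apply/val_inj.
  by rewrite phiA.
- right; have -> : x = ord_max by apply/val_inj.
  rewrite /phi fe_cons /=; have -> : (k' == 0) = false by lia.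
  rewrite /Bof; congr cons_tuple; apply/val_inj => /=.
  rewrite -map_comp; under eq_map do rewrite /= rev_ordK.
  by rewrite map_id.
Qed.
End S.

Theorem corollary1 (k n : nat) :
  2 <= k -> 1 <= n ->
  {in L k n &, injective (@phi k n)} /\
  (forall b : (n.-1).-tuple 'I_k, exists2 a, a \in L k n & phi a = b).
Proof.
case: k => [|k'] // hk; case: n => [|m] // _.
have hk' : 1 <= k' by [].
split.
- move=> a a' ha ha' e.
  case: (Ldecomp hk' ha) => Ea; case: (Ldecomp hk' ha') => Ea';
    move: ha ha'; rewrite {}Ea {}Ea' -e; move: (phi a) => c.
  + by move=> _ _.
  + move=> h1 h2; have H := @BnotA k' m hk' c.
    move: (etrans (esym h2) H) => /esym/negP K; case: (K h1).
  + move=> h1 h2; have H := @BnotA k' m hk' c.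
    move: (etrans (esym h1) H) => /esym/negP K; case: (K h2).
  + by move=> _ _.
- move=> b /=.
  case hA: (Aof b \in L k'.+1 m.+1).
  + by exists (Aof b) => //; rewrite phiA.
  + by exists (Bof b); [rewrite BnotA // hA | rewrite phiB].
Qed.
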